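(* Fix $N\ge 1$ and $\Delta t>0$. Let $\mathbf{b}_n,\mathbf{b}_{n+1}\in\mathbb{C}^N$ with components $b_{j,n},b_{j,n+1}$, with the convention $b_{0,m}=b_{N+1,m}=0$ for $m\in\{n,n+1\}$, and suppose that $\mathbf{b}_{n+1}$ is an exact solution of the system $$b_{j,n+1}=b_{j,n}+\Delta t\Big(-i\,|b|^2_{j,n+1/2}\,b_{j,n+1/2}+2i\,\overline{b_{j,n+1/2}}\,\big[(b^2)_{j+1,n+1/2}+(b^2)_{j-1,n+1/2}\big]\Big),\qquad j=1,\dots,N,$$ where $b_{j,n+1/2}=\tfrac12(b_{j,n}+b_{j,n+1})$, $|b|^2_{j,n+1/2}=\tfrac12(|b_{j,n}|^2+|b_{j,n+1}|^2)$ and $(b^2)_{j,n+1/2}=\tfrac12(b_{j,n}^2+b_{j,n+1}^2)$. Then $\mathcal{H}[\mathbf{b}_{n+1}]=\mathcal{H}[\mathbf{b}_n]$, where $$\mathcal{H}[\mathbf{b}]=\sum_{j=1}^N\Big(\tfrac14|b_j|^4-\operatorname{Re}\big(\bar b_j^{\,2}\,b_{j-1}^2\big)\Big),\qquad b_0=0.$$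
   Context: This is an energy-preserving discretization of the toy model system $-i\dot b_j=-|b_j|^2b_j+2b_{j-1}^2\bar b_j+2b_{j+1}^2\bar b_j$, $j=1,\dots,N$, with $b_0=b_{N+1}=0$, whose Hamiltonian is $\mathcal{H}$. *)

(* Defs.v *)
From mathcomp Require Import all_boot all_order all_algebra.
From mathcomp Require Import complex.
Set Implicit Arguments. Unset Strict Implicit. Unset Printing Implicit Defensive.
Import Order.TTheory GRing.Theory Num.Theory.
Local Open Scope ring_scope.

(* Complex numbers are R[i] (mathcomp-real-closed) for a real closed field R
   (e.g. the reals); R[i] is a numClosedFieldType, so we use the generic
   notations `|z| (modulus), 'Re z, z^* (conjugate), 'i.
   A vector b in C^N is a function 'I_N -> R[i]; component b_j (1 <= j <= N)
   is b (j-1), and bx b j extends it by b_0 = b_{N+1} = 0 (and 0 beyond). *)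
Definition bx (R : rcfType) (N : nat) (b : 'I_N -> R[i]) (j : nat) : R[i] :=
  if j is k.+1 then oapp b 0 [pick i : 'I_N | nat_of_ord i == k] else 0.

Definition Ham (R : rcfType) (N : nat) (b : 'I_N -> R[i]) : R[i] :=
  \sum_(1 <= j < N.+1)
     (`|bx b j| ^+ 4 / 4 - 'Re ((bx b j)^* ^+ 2 * (bx b j.-1) ^+ 2)).

Definition bmid (R : rcfType) N (b0 b1 : 'I_N -> R[i]) (j : nat) : R[i] :=
  (bx b0 j + bx b1 j) / 2.
Definition absmid (R : rcfType) N (b0 b1 : 'I_N -> R[i]) (j : nat) : R[i] :=
  (`|bx b0 j| ^+ 2 + `|bx b1 j| ^+ 2) / 2.
Definition sqmid (R : rcfType) N (b0 b1 : 'I_N -> R[i]) (j : nat) : R[i] :=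
  ((bx b0 j) ^+ 2 + (bx b1 j) ^+ 2) / 2.

Definition scheme (R : rcfType) N (dt : R) (b0 b1 : 'I_N -> R[i]) : Prop :=
  forall j : nat, (1 <= j <= N)%N ->
    bx b1 j = bx b0 j + (dt%:C)%C *
      (- 'i * absmid b0 b1 j * bmid b0 b1 j
       + 2 * 'i * (bmid b0 b1 j)^* * (sqmid b0 b1 j.+1 + sqmid b0 b1 j.-1)).

(* Main.v *)
Require Import Defs.
From mathcomp Require Import all_boot all_order all_algebra.
From mathcomp Require Import complex ring lra.
Import Order.TTheory GRing.Theory Num.Theory.
Local Open Scope ring_scope.

Section Alg.
Context {C : numClosedFieldType}.
Implicit Types u v p q r s c : C.
Definition Fh (b c : C) := `|b| ^+ 4 / 4 - 'Re (b^* ^+ 2 * c ^+ 2).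
Definition mm u v := (u + v) / 2.
Definition AA u v := (`|u| ^+ 2 + `|v| ^+ 2) / 2.
Definition SS u v := (u ^+ 2 + v ^+ 2) / 2.
Definition EE u v := AA u v * 'Re ((mm u v)^* * (v - u)).
Definition KK u v r s := 2 * 'Re ((mm u v * (v - u))^* * SS r s).

Lemma cD x y : (x + y)^* = x^* + y^* :> C. Proof. exact: rmorphD. Qed.
Lemma cB x y : (x - y)^* = x^* - y^* :> C. Proof. exact: rmorphB. Qed.
Lemma cM x y : (x * y)^* = x^* * y^* :> C. Proof. exact: rmorphM. Qed.
Lemma cN x : (- x)^* = - x^* :> C. Proof. exact: rmorphN. Qed.
Lemma cX x n : (x ^+ n)^* = x^* ^+ n :> C. Proof. exact: rmorphXn. Qed.
Lemma cV x : (x^-1)^* = x^*^-1 :> C. Proof. exact: fmorphV. Qed.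
Lemma c2 : (2 : C)^* = 2. Proof. exact: rmorph_nat. Qed.
Lemma n4 x : `|x| ^+ 4 = (x * x^*) ^+ 2 :> C.
Proof. by rewrite -normCK -exprM. Qed.

Lemma two_neq0 : (2 : C) != 0. Proof. by rewrite pnatr_eq0. Qed.

Lemma id1 u v p q : Fh v q - Fh u p = EE u v - KK u v p q - KK p q u v.
Proof.
rewrite /Fh /EE /KK /AA /SS /mm !ReE !n4 !normCK.
rewrite !(cD, cM, cB, cX, cN, cV, conjCK, c2).
by field.
Qed.

Lemma id2 u v p q r s c : c^* = c ->
  v = u + c * (- 'i * AA u v * mm u v + 2 * 'i * (mm u v)^* * (SS r s + SS p q)) ->
  EE u v - KK u v p q - KK u v r s = 0.
Proof.
move=> hc hv.
set W := AA u v * mm u v - 2 * (mm u v)^* * (SS r s + SS p q).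
have hd : v - u = - 'i * c * W by rewrite hv /W; ring.
have -> : EE u v - KK u v p q - KK u v r s = 'Re ((v - u)^* * W).
  rewrite /EE /KK /W /AA /SS /mm !ReE !normCK.
  rewrite !(cD, cM, cB, cX, cN, cV, conjCK, c2).
  by field.
rewrite hd ReE !(cD, cM, cB, cX, cN, cV, conjCK, c2) hc conjCi.
by field.
Qed.
End Alg.

Lemma bx0 (R : rcfType) N (b : 'I_N -> R[i]) : bx b 0 = 0. Proof. by []. Qed.
Lemma bxN (R : rcfType) N (b : 'I_N -> R[i]) : bx b N.+1 = 0.
Proof.
rewrite /bx; case: pickP => [i /eqP hi|] //=.
by have := ltn_ord i; rewrite hi ltnn.
Qed.

Lemma shiftk (C : zmodType) (k : nat -> C) n : k 0%N = 0 -> k n = 0 ->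
  \sum_(0 <= j < n) k j = \sum_(0 <= j < n) k j.+1.
Proof.
case: n => [|n] k0 kN; first by rewrite !big_geq.
by rewrite big_nat_recl // big_nat_recr //= k0 kN add0r addr0.
Qed.

Theorem proposition2p3 (R : rcfType) (N : nat) (dt : R)
  (b0 b1 : 'I_N -> R[i]) :
  (1 <= N)%N -> 0 < dt -> scheme dt b0 b1 -> Ham b1 = Ham b0.
Proof.
move=> hN _ hs.
set u := bx b0; set v := bx b1.
set k := fun j => KK (u j) (v j) (u j.+1) (v j.+1).
have hc : Num.conj_op ((dt%:C)%C : R[i]) = (dt%:C)%C by exact: conjc_real.
have e1 : Ham b1 - Ham b0 = \sum_(1 <= j < N.+1) (EE (u j) (v j)
     - KK (u j) (v j) (u j.-1) (v j.-1) - KK (u j.-1) (v j.-1) (u j) (v j)).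
  by rewrite /Ham -sumrB; apply: eq_bigr => j _; exact: id1.
have e2 : \sum_(1 <= j < N.+1) KK (u j.-1) (v j.-1) (u j) (v j)
        = \sum_(1 <= j < N.+1) k j.
  rewrite (_ : \sum_(1 <= j < N.+1) KK (u j.-1) (v j.-1) (u j) (v j)
            = \sum_(1 <= j < N.+1) k j.-1); last first.
    by rewrite big_nat_cond [RHS]big_nat_cond; apply: eq_bigr => j /andP[/andP[h1 _] _]; rewrite /k prednK.
  rewrite !big_add1 /=.
  apply: shiftk.
    by rewrite /k /KK /mm /u /v !bx0 addr0 mul0r mul0r rmorph0 mul0r ReE rmorph0 addr0 mul0r mulr0.
  by rewrite /k /KK /SS /u /v !bxN expr0n /= addr0 mul0r mulr0 ReE rmorph0 addr0 mul0r mulr0.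
apply/eqP; rewrite -subr_eq0; apply/eqP. rewrite e1 !sumrB e2 -!sumrB.
rewrite big_nat_cond big1 // => j /andP[/andP[h1 h2] _].
rewrite /k. have hj := hs j (ltac:(by rewrite h1 -ltnS h2)). exact: (id2 _ _ _ _ _ _ _ hc hj).
Qed.
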